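(* Fix $d\ge 2$. The function $C(\rho,\sigma)=\sqrt{1-\mathcal{F}_2(\rho,\sigma)}$, where $\mathcal{F}_2(\rho,\sigma)=\operatorname{tr}(\rho\sigma)/\max[\operatorname{tr}(\rho^2),\operatorname{tr}(\sigma^2)]$, is a metric on the set of $d\times d$ density matrices; i.e. it is nonnegative, vanishes iff $\rho=\sigma$, is symmetric, and satisfies $C(\rho,\sigma)\le C(\rho,\tau)+C(\tau,\sigma)$ for all density matrices $\rho,\sigma,\tau$.
   Context: A density matrix is a positive semidefinite complex matrix of unit trace. *)

(* Defs.v *)
(* complex numbers R[i] over a real closed field R
   (e.g. R : realType gives the usual complex numbers). *)
From HB Require Import structures.
From mathcomp Require Import all_boot all_order all_algebra.
From mathcomp Require Import complex.
Set Implicit Arguments. Unset Strict Implicit. Unset Printing Implicit Defensive.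
Import Order.TTheory GRing.Theory Num.Theory.
Local Open Scope ring_scope.

Definition adjmx (R : rcfType) (d : nat) (A : 'M[R[i]]_d) : 'M[R[i]]_d :=
  (map_mx Num.conj A)^T.

Definition psdmx (R : rcfType) (d : nat) (A : 'M[R[i]]_d) : Prop :=
  adjmx A = A /\
  forall v : 'rV[R[i]]_d, 0 <= (v *m A *m (map_mx Num.conj v)^T) 0 0.

Definition density (R : rcfType) (d : nat) (A : 'M[R[i]]_d) : Prop :=
  psdmx A /\ \tr A = 1.

(* F_2(rho, sigma) = tr(rho sigma) / max(tr rho^2, tr sigma^2);
   the traces are real for Hermitian matrices, so we take real parts. *)
Definition F2 (R : rcfType) (d : nat) (rho sigma : 'M[R[i]]_d) : R :=
  complex.Re (\tr (rho *m sigma)) /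
  Num.max (complex.Re (\tr (rho *m rho))) (complex.Re (\tr (sigma *m sigma))).

Definition Cdist (R : rcfType) (d : nat) (rho sigma : 'M[R[i]]_d) : R :=
  Num.sqrt (1 - F2 rho sigma).

(* Main.v *)
From HB Require Import structures.
From mathcomp Require Import all_boot all_order all_algebra.
From mathcomp Require Import complex ring lra.
Require Import Defs.
Set Implicit Arguments. Unset Strict Implicit.
Import Order.TTheory GRing.Theory Num.Theory.
Local Open Scope ring_scope.
Section Real.
Variable R : rcfType.
Definition PSD3 (m1 m2 m3 g12 g13 g23 : R) :=
  forall c1 c2 c3 : R, 0 <= c1*c1* m1 + c2*c2* m2 + c3*c3* m3
     + 2*c1*c2*g12 + 2*c1*c3*g13 + 2*c2*c3*g23.

Definition Ek (m1 m2 m3 g12 g13 g23 b1 b2 b3 : R) :=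
  b1*b1* m1* m1 + b2*b2* m2* m2 + b3*b3* m3* m3
  + 2*b1*b2*Num.min m1 m2*g12 + 2*b1*b3*Num.min m1 m3*g13
  + 2*b2*b3*Num.min m2 m3*g23.

Lemma ker_sorted (m1 m2 m3 g12 g13 g23 b1 b2 b3 : R) :
  0 <= m1 -> m1 <= m2 -> m2 <= m3 -> PSD3 m1 m2 m3 g12 g13 g23 ->
  0 <= b1*b1* m1* m1 + b2*b2* m2* m2 + b3*b3* m3* m3
  + 2*b1*b2* m1*g12 + 2*b1*b3* m1*g13 + 2*b2*b3* m2*g23.
Proof.
move=> h1 h2 h3 H.
have G1 := H b1 b2 b3. have G2 := H 0 b2 b3. have G3 := H 0 0 b3.
have P1 := mulr_ge0 h1 G1.
have e2 : 0 <= m2 - m1 by rewrite subr_ge0.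
have e3 : 0 <= m3 - m2 by rewrite subr_ge0.
have P2 := mulr_ge0 e2 G2. have P3 := mulr_ge0 e3 G3.
have -> : b1*b1* m1* m1 + b2*b2* m2* m2 + b3*b3* m3* m3
  + 2*b1*b2* m1*g12 + 2*b1*b3* m1*g13 + 2*b2*b3* m2*g23 =
  m1 * (b1*b1* m1 + b2*b2* m2 + b3*b3* m3
     + 2*b1*b2*g12 + 2*b1*b3*g13 + 2*b2*b3*g23)
  + (m2 - m1) * (0*0* m1 + b2*b2* m2 + b3*b3* m3
     + 2*0*b2*g12 + 2*0*b3*g13 + 2*b2*b3*g23)
  + (m3 - m2) * (0*0* m1 + 0*0* m2 + b3*b3* m3
     + 2*0*0*g12 + 2*0*b3*g13 + 2*0*b3*g23) by ring.
by rewrite !addr_ge0.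
Qed.

Lemma PSD3_perm12 (m1 m2 m3 g12 g13 g23 : R) :
  PSD3 m1 m2 m3 g12 g13 g23 -> PSD3 m2 m1 m3 g12 g23 g13.
Proof.
move=> H c1 c2 c3; have := H c2 c1 c3.
by congr (_ <= _); ring.
Qed.

Lemma PSD3_perm23 (m1 m2 m3 g12 g13 g23 : R) :
  PSD3 m1 m2 m3 g12 g13 g23 -> PSD3 m1 m3 m2 g13 g12 g23.
Proof.
move=> H c1 c2 c3; have := H c1 c3 c2.
by congr (_ <= _); ring.
Qed.

Lemma Ek_perm12 (m1 m2 m3 g12 g13 g23 b1 b2 b3 : R) :
  Ek m1 m2 m3 g12 g13 g23 b1 b2 b3 = Ek m2 m1 m3 g12 g23 g13 b2 b1 b3.
Proof. rewrite /Ek (minC m2 m1); ring. Qed.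

Lemma Ek_perm23 (m1 m2 m3 g12 g13 g23 b1 b2 b3 : R) :
  Ek m1 m2 m3 g12 g13 g23 b1 b2 b3 = Ek m1 m3 m2 g13 g12 g23 b1 b3 b2.
Proof. rewrite /Ek (minC m3 m2); ring. Qed.

Lemma Ek_sorted (m1 m2 m3 g12 g13 g23 b1 b2 b3 : R) :
  0 <= m1 -> m1 <= m2 -> m2 <= m3 -> PSD3 m1 m2 m3 g12 g13 g23 ->
  0 <= Ek m1 m2 m3 g12 g13 g23 b1 b2 b3.
Proof.
move=> h1 h2 h3 H; rewrite /Ek (min_l h2) (min_l h3) (min_l (le_trans h2 h3)).
exact: ker_sorted.
Qed.

Lemma Ek_ge0 (m1 m2 m3 g12 g13 g23 b1 b2 b3 : R) :
  0 <= m1 -> 0 <= m2 -> 0 <= m3 -> PSD3 m1 m2 m3 g12 g13 g23 ->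
  0 <= Ek m1 m2 m3 g12 g13 g23 b1 b2 b3.
Proof.
move=> p1 p2 p3 H.
have [h12|h12] := leP m1 m2; have [h23|h23] := leP m2 m3;
  have [h13|h13] := leP m1 m3.
- exact: Ek_sorted.
- exact: Ek_sorted.
- rewrite Ek_perm23; apply: Ek_sorted => //; try exact: ltW; exact: PSD3_perm23.
- rewrite Ek_perm23 Ek_perm12; apply: Ek_sorted => //; try exact: ltW.
  apply: PSD3_perm12; exact: PSD3_perm23.
- rewrite Ek_perm12; apply: Ek_sorted => //; first exact: ltW.
  exact: PSD3_perm12.
- rewrite Ek_perm12 Ek_perm23; apply: Ek_sorted => //; try exact: ltW.
  apply: PSD3_perm23; exact: PSD3_perm12.
- have := lt_trans h23 h12; rewrite ltNge => /negP; done.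
- rewrite Ek_perm12 Ek_perm23 Ek_perm12; apply: Ek_sorted => //; try exact: ltW.
  apply: PSD3_perm12; apply: PSD3_perm23; exact: PSD3_perm12.
Qed.
Lemma minmax (a b : R) : 0 < a -> 0 < b -> Num.min a b = a * b / Num.max a b.
Proof.
move=> ha hb; rewrite minEle maxEle; case: leP => h.
- by field; rewrite gt_eqF.
- by field; rewrite gt_eqF.
Qed.

Lemma max_gt0 (a b : R) : 0 < a -> 0 < b -> 0 < Num.max a b.
Proof. by move=> ha hb; rewrite maxEle; case: ifP. Qed.

Lemma key_real (m1 m2 m3 g12 g13 g23 : R) :
  0 < m1 -> 0 < m2 -> 0 < m3 -> PSD3 m1 m2 m3 g12 g13 g23 ->
  forall s t : R,
  0 <= s * s * (1 - g12 / Num.max m1 m2) + t * t * (1 - g23 / Num.max m2 m3)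
     + s * t * ((1 - g13 / Num.max m1 m3) - (1 - g12 / Num.max m1 m2)
                 - (1 - g23 / Num.max m2 m3)).
Proof.
move=> h1 h2 h3 H s t.
have := Ek_ge0 (s / m1) ((t - s) / m2) (- t / m3) (ltW h1) (ltW h2) (ltW h3) H.
rewrite /Ek !minmax //.
have M12 := max_gt0 h1 h2; have M13 := max_gt0 h1 h3; have M23 := max_gt0 h2 h3.
set A := (X in 0 <= X -> _); set B := (X in _ -> 0 <= X).
have -> : A = 2 * B.
  rewrite /A /B; field.
  by rewrite !gt_eqF.
by rewrite pmulr_rge0 // ltr0n.
Qed.

Lemma tri_real (p q r : R) :
  (forall s t : R, 0 <= s * s * p + t * t * q + s * t * (r - p - q)) ->
  Num.sqrt r <= Num.sqrt p + Num.sqrt q.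
Proof.
move=> H.
have hp : 0 <= p by have := H 1 0; rewrite !(mul0r, mulr0, mul1r, addr0).
have hq : 0 <= q by have := H 0 1; rewrite !(mul0r, mulr0, mul1r, add0r, addr0).
set x := Num.sqrt p; set y := Num.sqrt q.
have hx : 0 <= x by apply: sqrtr_ge0.
have hy : 0 <= y by apply: sqrtr_ge0.
have ep : p = x ^+ 2 by rewrite sqr_sqrtr.
have eq : q = y ^+ 2 by rewrite sqr_sqrtr.
suff hr : r <= (x + y) ^+ 2.
  have := ler_wsqrtr hr; rewrite sqrtr_sqr ger0_norm //; exact: addr_ge0.
have [x0|xpos] := eqVneq x 0.
  rewrite x0 add0r -eq; rewrite leNgt; apply/negP => hrq.
  have := H (- (q + 1) / (r - q)) 1.
  rewrite ep x0 expr2 !(mul0r, mulr0, mul1r, add0r, addr0, subr0).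
  rewrite mulrAC divfK; last by rewrite gt_eqF // subr_gt0.
  lra.
have [y0|ypos] := eqVneq y 0.
  rewrite y0 addr0 -ep; rewrite leNgt; apply/negP => hrp.
  have := H 1 (- (p + 1) / (r - p)).
  rewrite eq y0 expr2 !(mul0r, mulr0, mul1r, add0r, addr0, subr0).
  rewrite divfK; last by rewrite gt_eqF // subr_gt0.
  lra.
have hxy : 0 < x * y by rewrite mulr_gt0 // lt_def ?xpos ?ypos ?hx ?hy.
have := H y (- x); rewrite ep eq => h.
have : 0 <= x * y * ((x + y) ^+ 2 - r).
  apply: le_trans h _; rewrite le_eqVlt; apply/orP; left; apply/eqP; ring.
rewrite pmulr_rge0 // subr_ge0 //.
Qed.
End Real.
Section M.
Variable R : rcfType.
Variable d : nat.
Definition G (A B : 'M[R[i]]_d) : R := complex.Re (\tr (A *m B)).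
Definition herm (A : 'M[R[i]]_d) := adjmx A = A.

Lemma ReD (x y : R[i]) : complex.Re (x + y) = complex.Re x + complex.Re y.
Proof. by case: x; case: y. Qed.
Lemma ReMr (c : R) (x : R[i]) : complex.Re ((c%:C)%C * x) = c * complex.Re x.
Proof. by case: x => a b /=; ring. Qed.

Lemma G_sym A B : G A B = G B A.
Proof. by rewrite /G mxtrace_mulC. Qed.
Lemma G_addl A B C : G (A + B) C = G A C + G B C.
Proof. by rewrite /G mulmxDl mxtraceD ReD. Qed.
Lemma G_addr A B C : G C (A + B) = G C A + G C B.
Proof. by rewrite G_sym G_addl !(G_sym C). Qed.
Lemma G_scalel (c : R) A B : G ((c%:C)%C *: A) B = c * G A B.
Proof. by rewrite /G -scalemxAl mxtraceZ ReMr. Qed.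
Lemma G_scaler (c : R) A B : G B ((c%:C)%C *: A) = c * G B A.
Proof. by rewrite G_sym G_scalel G_sym. Qed.

Lemma hermE A : herm A -> forall i j, A j i = (A i j)^*.
Proof. by move=> H i j; rewrite -{1}H /adjmx !mxE. Qed.

Lemma herm_add A B : herm A -> herm B -> herm (A + B).
Proof.
rewrite /herm /adjmx => hA hB; apply/matrixP => i j.
have := congr1 (fun M : 'M[R[i]]_d => M i j) hA; have := congr1 (fun M : 'M[R[i]]_d => M i j) hB.
by rewrite !mxE => <- <-; rewrite rmorphD.
Qed.

Lemma conj_realC (c : R) : ((c%:C)%C)^* = (c%:C)%C.
Proof. by apply: conj_Creal; apply/complex_realP; exists c. Qed.

Lemma herm_scale (c : R) A : herm A -> herm ((c%:C)%C *: A).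
Proof.
rewrite /herm /adjmx => hA; apply/matrixP => i j.
have := congr1 (fun M : 'M[R[i]]_d => M i j) hA.
by rewrite !mxE => <-; rewrite rmorphM; congr (_ * _); exact: conj_realC.
Qed.

Lemma trAA A : herm A ->
  \tr (A *m A) = \sum_i \sum_j (A i j * (A i j)^*).
Proof.
move=> H; rewrite /mxtrace; apply: eq_bigr => i _; rewrite mxE.
by apply: eq_bigr => j _; rewrite (hermE H i j).
Qed.

Lemma trAA_ge0 A : herm A -> 0 <= \tr (A *m A).
Proof.
move=> H; rewrite trAA //; apply: sumr_ge0 => i _; apply: sumr_ge0 => j _.
exact: mul_conjC_ge0.
Qed.

Lemma G_ge0 A : herm A -> 0 <= G A A.
Proof. by move=> H; have := trAA_ge0 H; rewrite lecE => /andP[]. Qed.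

Lemma G_eq0 A : herm A -> G A A = 0 -> A = 0.
Proof.
move=> H h0.
have h := trAA_ge0 H.
have z0 : \tr (A *m A) = 0.
  move: h h0; rewrite /G lecE; case: (\tr (A *m A)) => a b /= /andP[/eqP -> _] ->.
  done.
move: z0; rewrite trAA // => z0.
apply/matrixP => i j; rewrite mxE.
have hi : \sum_j (A i j * (A i j)^*) = 0.
  move: z0; move/psumr_eq0P => hh; apply: hh => // k _.
  by apply: sumr_ge0 => l _; exact: mul_conjC_ge0.
have : A i j * (A i j)^* = 0.
  move: hi; move/psumr_eq0P => hh; apply: hh => // k _; exact: mul_conjC_ge0.
by move/eqP; rewrite mul_conjC_eq0 => /eqP.
Qed.
End M.

Section Main.
Variable R : rcfType.
Variable d : nat.

Lemma F2E (A B : 'M[R[i]]_d) : F2 A B = G A B / Num.max (G A A) (G B B).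
Proof. by []. Qed.

Lemma dens_herm (A : 'M[R[i]]_d) : density A -> herm A.
Proof. by case=> [[]]. Qed.

Lemma dens_pos (A : 'M[R[i]]_d) : density A -> 0 < G A A.
Proof.
move=> hA; have hh := dens_herm hA.
rewrite lt_def G_ge0 // andbT; apply/eqP => h0.
have := G_eq0 hh h0 => A0; case: hA => _; rewrite A0 mxtrace0 => /eqP.
by rewrite eq_sym oner_eq0.
Qed.

Lemma dens_PSD3 (X Y Z : 'M[R[i]]_d) : herm X -> herm Y -> herm Z ->
  PSD3 (G X X) (G Y Y) (G Z Z) (G X Y) (G X Z) (G Y Z).
Proof.
move=> hX hY hZ c1 c2 c3.
have hV : herm ((c1%:C)%C *: X + (c2%:C)%C *: Y + (c3%:C)%C *: Z).
  by apply: herm_add; [apply: herm_add|]; apply: herm_scale.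
have := G_ge0 hV.
rewrite !G_addl !G_addr !G_scalel !G_scaler (G_sym Y X) (G_sym Z X) (G_sym Z Y).
by congr (_ <= _); ring.
Qed.
End Main.

Unset Implicit Arguments.

Theorem theorem9 (R : rcfType) (d : nat) (hd : (2 <= d)%N) :
  (forall rho sigma : 'M[R[i]]_d, density rho -> density sigma ->
     0 <= Cdist rho sigma) /\
  (forall rho sigma : 'M[R[i]]_d, density rho -> density sigma ->
     (Cdist rho sigma = 0 <-> rho = sigma)) /\
  (forall rho sigma : 'M[R[i]]_d, density rho -> density sigma ->
     Cdist rho sigma = Cdist sigma rho) /\
  (forall rho sigma tau : 'M[R[i]]_d,
     density rho -> density sigma -> density tau ->
     Cdist rho sigma <= Cdist rho tau + Cdist tau sigma).
Proof.
split; first by move=> *; exact: sqrtr_ge0.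
split.
  move=> rho sigma hr hs; rewrite /Cdist F2E.
  have p1 := dens_pos hr; have p2 := dens_pos hs.
  have M := max_gt0 p1 p2.
  split.
    move/eqP; rewrite sqrtr_eq0 subr_le0 ler_pdivlMr // mul1r => hM.
    have l1 : G rho rho <= Num.max (G rho rho) (G sigma sigma) by rewrite le_max lexx.
    have l2 : G sigma sigma <= Num.max (G rho rho) (G sigma sigma) by rewrite le_max lexx orbT.
    have hV : herm (rho + ((-1)%:C)%C *: sigma).
      by apply: herm_add; [apply: dens_herm|apply: herm_scale; apply: dens_herm].
    have h0 : G (rho + ((-1)%:C)%C *: sigma) (rho + ((-1)%:C)%C *: sigma) = 0.
      apply/eqP; rewrite eq_le G_ge0 // andbT.
      rewrite !G_addl !G_addr !G_scalel !G_scaler (G_sym sigma rho).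
      lra.
    have := G_eq0 hV h0.
    rewrite rmorphN1 scaleN1r => /eqP; rewrite subr_eq0 => /eqP //.
  move=> <-; rewrite maxxx divff ?subrr ?sqrtr0 //.
  by rewrite gt_eqF.
split.
  by move=> rho sigma hr hs; rewrite /Cdist !F2E G_sym maxC.
move=> rho sigma tau hr hs ht; rewrite /Cdist !F2E.
apply: tri_real.
apply: key_real; try exact: dens_pos.
by apply: dens_PSD3; apply: dens_herm.
Qed.
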